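(* Let $X\subseteq \mathbb{P}^1\times\mathbb{P}^1\times\mathbb{P}^1$ be a variety of lines such that, for each $h=1,2,3$, $U_h(X)$ resembles a Ferrers diagram. Then $X$ has the $Hyp_4(\star)$-property if and only if for all $a_1,a_2\in[d_1]$, $b_1,b_2\in[d_2]$, $c_1,c_2\in[d_3]$ the following three conditions hold: (1) either $(\mu_{a_1b_1c_1},\mu_{a_2b_1c_1})\neq(1,1)$ or $(\mu_{a_1b_10},\mu_{a_2b_10})\neq(1,0)$; (2) either $(\mu_{a_1b_1c_1},\mu_{a_1b_1c_2})\neq(1,1)$ or $(\mu_{a_10c_1},\mu_{a_10c_2})\neq(1,0)$; (3) either $(\mu_{a_1b_1c_1},\mu_{a_1b_2c_1})\neq(1,1)$ or $(\mu_{0b_1c_1},\mu_{0b_2c_1})\neq(1,0)$.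
   Context: $R=K[x_{1,0},x_{1,1},x_{2,0},x_{2,1},x_{3,0},x_{3,1}]$ ($K$ algebraically closed, characteristic zero) trigraded by $\deg x_{i,j}=\mathbf e_i$, coordinate ring of $\mathbb{P}^1\times\mathbb{P}^1\times\mathbb{P}^1$. A variety of lines is written $X= \bigcup_{(i,j)\in U_3(X)} \mathcal{L}(A_i,B_j)\cup\bigcup_{(i,k)\in U_2(X)} \mathcal{L}(A_i,C_k)\cup \bigcup_{(j,k)\in U_1(X)} \mathcal{L}(B_j,C_k)$, where $\mathcal L(A_1),\ldots,\mathcal L(A_{d_1})$, $\mathcal L(B_1),\ldots,\mathcal L(B_{d_2})$, $\mathcal L(C_1),\ldots,\mathcal L(C_{d_3})$ are the distinct hyperplanes containing some line of $X$, defined by linear forms of degrees $(1,0,0),(0,1,0),(0,0,1)$ respectively, $\mathcal L(F,G)$ is the line defined by $(F,G)$, $U_3(X)\subseteq[d_1]\times[d_2]$, $U_2(X)\subseteq[d_1]\times[d_3]$, $U_1(X)\subseteq[d_2]\times[d_3]$, $[n]=\{1,\dots,n\}$. $U_h(X)$ resembles a Ferrers diagram if after permuting each of its two index sets it becomes a set $U$ with: $(u,v)\in U\Rightarrow (u',v')\in U$ for all $1\le u'\le u$, $1\le v'\le v$. For $P_{ijk}=\mathcal L(A_i)\cap\mathcal L(B_j)\cap\mathcal L(C_k)$, $\mu_{ijk}$ is the number of lines of $X$ through $P_{ijk}$. Moreover $\mu_{ij0}=1$ if $\mathcal L(A_i,B_j)\in X$ and $0$ otherwise; $\mu_{i0k}=1$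 if $\mathcal L(A_i,C_k)\in X$ and $0$ otherwise; $\mu_{0jk}=1$ if $\mathcal L(B_j,C_k)\in X$ and $0$ otherwise. $X$ has the $Hyp_4(\star)$-property if for any $4$ hyperplanes $H_1,\ldots,H_4$ (each defined by a linear form of degree some $\mathbf e_i$) such that $\mathcal{L}(H_i,H_j)$ is a line of $X$ for all $j\neq i-1,i,i+1$ (indices modulo $4$), there is $u$ with $\mathcal{L}(H_u,H_{u+1})$ a line of $X$. *)

(* Defs.v *)
From HB Require Import structures.
From mathcomp Require Import all_boot all_order fingroup perm all_algebra.

(* Points of P^1(K): [a:1] <-> Some a, [1:0] <-> None.  A hyperplane of
   P^1 x P^1 x P^1 defined by a linear form of degree e_t is determined by
   its type t (0,1,2 for e_1,e_2,e_3) and the zero of that form in P^1. *)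
Definition P1 (K : fieldType) := option K.
Definition hyperplane (K : fieldType) := ('I_3 * P1 K)%type.

Record lines_variety (K : fieldType) := LinesVariety {
  d1 : nat; d2 : nat; d3 : nat;
  A : 'I_d1 -> P1 K; B : 'I_d2 -> P1 K; C : 'I_d3 -> P1 K;
  A_inj : injective A; B_inj : injective B; C_inj : injective C;
  U3 : {set 'I_d1 * 'I_d2};
  U2 : {set 'I_d1 * 'I_d3};
  U1 : {set 'I_d2 * 'I_d3};
  A_cov : forall i : 'I_d1, (exists j, (i, j) \in U3) \/ (exists k, (i, k) \in U2);
  B_cov : forall j : 'I_d2, (exists i, (i, j) \in U3) \/ (exists k, (j, k) \in U1);
  C_cov : forall k : 'I_d3, (exists i, (i, k) \in U2) \/ (exists j, (j, k) \in U1)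
}.

Arguments d1 {K}. Arguments d2 {K}. Arguments d3 {K}.
Arguments A {K}. Arguments B {K}. Arguments C {K}.
Arguments U1 {K}. Arguments U2 {K}. Arguments U3 {K}.

Set Implicit Arguments. Unset Strict Implicit. Unset Printing Implicit Defensive.

Section Defs.
Variables (K : fieldType) (X : lines_variety K).

Definition tA : 'I_3 := inord 0.
Definition tB : 'I_3 := inord 1.
Definition tC : 'I_3 := inord 2.

Definition same_pair (H H' G G' : hyperplane K) : bool :=
  ((H == G) && (H' == G')) || ((H == G') && (H' == G)).

Definition is_line_of (H H' : hyperplane K) : bool :=
  [exists p in U3 X, same_pair H H' (tA, A X p.1) (tB, B X p.2)] ||
  [exists p in U2 X, same_pair H H' (tA, A X p.1) (tC, C X p.2)] ||
  [exists p in U1 X, same_pair H H' (tB, B X p.1) (tC, C X p.2)].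

(* mu_{ijk}: number of lines of X through P_{ijk} = (A i, B j, C k). *)
Definition mu (i : 'I_(d1 X)) (j : 'I_(d2 X)) (k : 'I_(d3 X)) : nat :=
  #|[set p in U3 X | (A X p.1 == A X i) && (B X p.2 == B X j)]|
  + #|[set p in U2 X | (A X p.1 == A X i) && (C X p.2 == C X k)]|
  + #|[set p in U1 X | (B X p.1 == B X j) && (C X p.2 == C X k)]|.

Definition mu_ij0 (i : 'I_(d1 X)) (j : 'I_(d2 X)) : nat :=
  is_line_of (tA, A X i) (tB, B X j).
Definition mu_i0k (i : 'I_(d1 X)) (k : 'I_(d3 X)) : nat :=
  is_line_of (tA, A X i) (tC, C X k).
Definition mu_0jk (j : 'I_(d2 X)) (k : 'I_(d3 X)) : nat :=
  is_line_of (tB, B X j) (tC, C X k).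

Definition Hyp4_star : Prop :=
  forall H : 'I_4 -> hyperplane K,
    (forall i j : 'I_4,
        j != i -> val j != (i.+1 %% 4)%N -> val j != ((i + 3) %% 4)%N ->
        is_line_of (H i) (H j)) ->
    exists u : 'I_4, is_line_of (H u) (H (inord ((u.+1) %% 4))).
End Defs.

Definition resembles_Ferrers (m n : nat) (U : {set 'I_m * 'I_n}) : Prop :=
  exists (s : {perm 'I_m}) (t : {perm 'I_n}),
    let U' := [set (s p.1, t p.2) | p in U] in
    forall u u' : 'I_m, forall v v' : 'I_n,
      (u, v) \in U' -> (u' <= u)%N -> (v' <= v)%N -> (u', v') \in U'.

(* Main.v *)
Require Import Defs.
From HB Require Import structures.
From mathcomp Require Import all_boot all_order fingroup perm all_algebra.
Import GRing.Theory.
Local Open Scope ring_scope.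

Lemma ne_AB : tA = tB -> False. Proof. by move/(congr1 (@nat_of_ord 3)); rewrite /tA /tB !inordK. Qed.
Lemma ne_AC : tA = tC -> False. Proof. by move/(congr1 (@nat_of_ord 3)); rewrite /tA /tC !inordK. Qed.
Lemma ne_BC : tB = tC -> False. Proof. by move/(congr1 (@nat_of_ord 3)); rewrite /tB /tC !inordK. Qed.

Ltac tdiscr := exfalso; first
  [ apply: ne_AB; assumption | apply: ne_AC; assumption | apply: ne_BC; assumption
  | apply: ne_AB; symmetry; assumption | apply: ne_AC; symmetry; assumption
  | apply: ne_BC; symmetry; assumption ].

Lemma same_pairC (K : fieldType) (H H' G G' : hyperplane K) :
  same_pair H H' G G' = same_pair H' H G G'.
Proof. by rewrite /same_pair orbC; case: (H == G); case: (H == G'); case: (H' == G); case: (H' == G'). Qed.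

Lemma is_line_ofC {K : fieldType} (X : lines_variety K) H H' :
  is_line_of X H H' = is_line_of X H' H.
Proof.
by rewrite /is_line_of; congr (_ || _ || _); apply: eq_existsb => p; rewrite same_pairC.
Qed.

Definition Lab {K : fieldType} (X : lines_variety K) (H H' : hyperplane K) :=
  exists i j, [/\ (i, j) \in U3 X, H = (tA, A X i) & H' = (tB, B X j)].
Definition Lac {K : fieldType} (X : lines_variety K) (H H' : hyperplane K) :=
  exists i j, [/\ (i, j) \in U2 X, H = (tA, A X i) & H' = (tC, C X j)].
Definition Lbc {K : fieldType} (X : lines_variety K) (H H' : hyperplane K) :=
  exists i j, [/\ (i, j) \in U1 X, H = (tB, B X i) & H' = (tC, C X j)].

Lemma lineP (K : fieldType) (X : lines_variety K) H H' : is_line_of X H H' ->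
  Lab X H H' \/ Lab X H' H \/ Lac X H H' \/ Lac X H' H \/ Lbc X H H' \/ Lbc X H' H.
Proof.
rewrite /is_line_of => /orP[/orP[]|] /existsP[[i j] /andP[hp /orP[]/andP[/eqP e1 /eqP e2]]].
- by left; exists i, j.
- by right; left; exists i, j.
- by do 2 right; left; exists i, j.
- by do 3 right; left; exists i, j.
- by do 4 right; left; exists i, j.
- by do 5 right; exists i, j.
Qed.



Lemma E_same (K : fieldType) (X : lines_variety K) t x y :
  is_line_of X (t, x) (t, y) = false.
Proof. by apply/negP => /lineP; case=> [[i [j [h E1 E2]]]|[[i [j [h E1 E2]]]|[[i [j [h E1 E2]]]|[[i [j [h E1 E2]]]|[[i [j [h E1 E2]]]|[i [j [h E1 E2]]]]]]]]; pose proof (congr1 fst E1) as e1; pose proof (congr1 snd E1) as e2; pose proof (congr1 fst E2) as e3; pose proof (congr1 snd E2) as e4; simpl in e1, e2, e3, e4; subst; tdiscr. Qed.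

Lemma E_AB (K : fieldType) (X : lines_variety K) a b :
  is_line_of X (tA, A X a) (tB, B X b) = ((a, b) \in U3 X).
Proof.
apply/idP/idP => [/lineP|h]; last first.
  by apply/orP; left; apply/orP; left; apply/existsP; exists (a, b); rewrite h /same_pair !eqxx.
case=> [[i [j [h E1 E2]]]|[[i [j [h E1 E2]]]|[[i [j [h E1 E2]]]|[[i [j [h E1 E2]]]|[[i [j [h E1 E2]]]|[i [j [h E1 E2]]]]]]]]; pose proof (congr1 fst E1) as e1; pose proof (congr1 snd E1) as e2; pose proof (congr1 fst E2) as e3; pose proof (congr1 snd E2) as e4; simpl in e1, e2, e3, e4; try tdiscr.
by rewrite (@A_inj _ X _ _ e2) (@B_inj _ X _ _ e4).
Qed.

Lemma E_AC (K : fieldType) (X : lines_variety K) a b :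
  is_line_of X (tA, A X a) (tC, C X b) = ((a, b) \in U2 X).
Proof.
apply/idP/idP => [/lineP|h]; last first.
  by apply/orP; left; apply/orP; right; apply/existsP; exists (a, b); rewrite h /same_pair !eqxx.
case=> [[i [j [h E1 E2]]]|[[i [j [h E1 E2]]]|[[i [j [h E1 E2]]]|[[i [j [h E1 E2]]]|[[i [j [h E1 E2]]]|[i [j [h E1 E2]]]]]]]]; pose proof (congr1 fst E1) as e1; pose proof (congr1 snd E1) as e2; pose proof (congr1 fst E2) as e3; pose proof (congr1 snd E2) as e4; simpl in e1, e2, e3, e4; try tdiscr.
by rewrite (@A_inj _ X _ _ e2) (@C_inj _ X _ _ e4).
Qed.

Lemma E_BC (K : fieldType) (X : lines_variety K) a b :
  is_line_of X (tB, B X a) (tC, C X b) = ((a, b) \in U1 X).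
Proof.
apply/idP/idP => [/lineP|h]; last first.
  by apply/orP; right; apply/existsP; exists (a, b); rewrite h /same_pair !eqxx.
case=> [[i [j [h E1 E2]]]|[[i [j [h E1 E2]]]|[[i [j [h E1 E2]]]|[[i [j [h E1 E2]]]|[[i [j [h E1 E2]]]|[i [j [h E1 E2]]]]]]]]; pose proof (congr1 fst E1) as e1; pose proof (congr1 snd E1) as e2; pose proof (congr1 fst E2) as e3; pose proof (congr1 snd E2) as e4; simpl in e1, e2, e3, e4; try tdiscr.
by rewrite (@B_inj _ X _ _ e2) (@C_inj _ X _ _ e4).
Qed.

Lemma E_BA (K : fieldType) (X : lines_variety K) a b :
  is_line_of X (tB, B X b) (tA, A X a) = ((a, b) \in U3 X).
Proof. by rewrite is_line_ofC E_AB. Qed.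
Lemma E_CA (K : fieldType) (X : lines_variety K) a b :
  is_line_of X (tC, C X b) (tA, A X a) = ((a, b) \in U2 X).
Proof. by rewrite is_line_ofC E_AC. Qed.
Lemma E_CB (K : fieldType) (X : lines_variety K) a b :
  is_line_of X (tC, C X b) (tB, B X a) = ((a, b) \in U1 X).
Proof. by rewrite is_line_ofC E_BC. Qed.

Lemma card_sel (T : finType) (S : {set T}) x : #|[set p in S | p == x]| = (x \in S).
Proof.
case: (boolP (x \in S)) => h.
  have -> : [set p in S | p == x] = [set x].
    by apply/setP => p; rewrite !inE; case: eqP => [->|]; rewrite ?h ?andbT ?andbF.
  by rewrite cards1.
have -> : [set p in S | p == x] = set0.
  by apply/setP => p; rewrite !inE; case: eqP => [->|]; rewrite ?(negbTE h) ?andbT ?andbF.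
by rewrite cards0.
Qed.

Lemma muE (K : fieldType) (X : lines_variety K) i j k :
  mu i j k = (((i, j) \in U3 X) + ((i, k) \in U2 X) + ((j, k) \in U1 X))%N.
Proof.
rewrite /mu -(@card_sel _ (U3 X) (i, j)) -(@card_sel _ (U2 X) (i, k)) -(@card_sel _ (U1 X) (j, k)).
by congr (_ + _ + _)%N; apply: eq_card => -[p1 p2];
  rewrite !inE /= ?(inj_eq (@A_inj _ X)) ?(inj_eq (@B_inj _ X)) ?(inj_eq (@C_inj _ X)) xpair_eqE.
Qed.

Lemma ferrers2 {m n} {U : {set 'I_m * 'I_n}} : resembles_Ferrers U ->
  forall a1 a2 b1 b2, (a1, b1) \in U -> (a2, b2) \in U -> ((a2, b1) \in U) || ((a1, b2) \in U).
Proof.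
case=> s [t hU] a1 a2 b1 b2 h1 h2.
pose f := fun p : 'I_m * 'I_n => (s p.1, t p.2).
have finj : injective f by move=> [x y] [x' y'] [/perm_inj -> /perm_inj ->].
have hU' : forall (u u' : 'I_m) (v v' : 'I_n), (u, v) \in [set f p | p in U] -> (u' <= u)%N -> (v' <= v)%N ->
   (u', v') \in [set f p | p in U] := hU.
have memE x y : ((s x, t y) \in [set f p | p in U]) = ((x, y) \in U).
  by rewrite -(mem_imset (mem U) (x, y) finj).
have g1 := h1; have g2 := h2; rewrite -memE in g1; rewrite -memE in g2.
case: (leqP (s a1) (s a2)) => ha.
  apply/orP; right; rewrite -memE.
  case: (leqP (t b1) (t b2)) => hb.
    by apply: (hU' _ _ _ _ g2).
  by apply: (hU' _ _ _ _ g1) => //; apply: ltnW.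
apply/orP; left; rewrite -memE.
case: (leqP (t b1) (t b2)) => hb.
  by apply: (hU' _ _ _ _ g2).
by apply: (hU' _ _ _ _ g1) => //; apply: ltnW.
Qed.

Definition quad {K : fieldType} (X : lines_variety K) := forall P Q R S : hyperplane K,
  is_line_of X P Q -> is_line_of X R S ->
  [|| is_line_of X P R, is_line_of X R Q, is_line_of X Q S | is_line_of X S P].

Definition H4 {K : fieldType} (P R Q S : hyperplane K) (i : 'I_4) :=
  nth (tA, None) [:: P; R; Q; S] i.

Lemma Hyp4_quad (K : fieldType) (X : lines_variety K) : Hyp4_star X <-> quad X.
Proof.
split=> [hyp P Q R S hPQ hRS | hq H hH].
  have [u hu] : exists u : 'I_4, is_line_of X (H4 P R Q S u) (H4 P R Q S (inord ((u.+1) %% 4))).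
    by apply: hyp => i j; case: i => [[|[|[|[|//]]]] hi]; case: j => [[|[|[|[|//]]]] hj] //=;
      rewrite /H4 /= // is_line_ofC.
  move: hu; case: u => [[|[|[|[|//]]]] hu]; rewrite /H4 /= inordK //= => ->; by rewrite ?orbT.
have h02 := hH (inord 0) (inord 2).
have h13 := hH (inord 1) (inord 3).
rewrite -?val_eqE /= ?inordK // in h02 h13.
have := hq _ _ _ _ (h02 isT isT isT) (h13 isT isT isT).
case/or4P => h; [exists (inord 0) | exists (inord 1) | exists (inord 2) | exists (inord 3)];
  by rewrite inordK.
Qed.

Definition cond1 {K : fieldType} (X : lines_variety K) := forall a1 a2 b1 c1,
  (a1, b1) \in U3 X -> (a2, c1) \in U2 X ->
  [|| (a1, c1) \in U2 X, (a2, b1) \in U3 X | (b1, c1) \in U1 X].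
Definition cond2 {K : fieldType} (X : lines_variety K) := forall a1 b1 c1 c2,
  (a1, c1) \in U2 X -> (b1, c2) \in U1 X ->
  [|| (a1, b1) \in U3 X, (b1, c1) \in U1 X | (a1, c2) \in U2 X].
Definition cond3 {K : fieldType} (X : lines_variety K) := forall a1 b1 b2 c1,
  (b1, c1) \in U1 X -> (a1, b2) \in U3 X ->
  [|| (a1, b1) \in U3 X, (a1, c1) \in U2 X | (b2, c1) \in U1 X].

Lemma quad_cond (K : fieldType) (X : lines_variety K) :
  quad X -> cond1 X /\ cond2 X /\ cond3 X.
Proof.
move=> hq; split; [|split].
- move=> a1 a2 b1 c1 h1 h2.
  have := hq (tA, A X a1) (tB, B X b1) (tA, A X a2) (tC, C X c1).
  rewrite !(E_same, E_AB, E_BA, E_AC, E_CA, E_BC, E_CB) => /(_ h1 h2).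
  by case/or4P => // ->; rewrite ?orbT.
- move=> a1 b1 c1 c2 h1 h2.
  have := hq (tA, A X a1) (tC, C X c1) (tB, B X b1) (tC, C X c2).
  rewrite !(E_same, E_AB, E_BA, E_AC, E_CA, E_BC, E_CB) => /(_ h1 h2).
  by case/or4P => // ->; rewrite ?orbT.
- move=> a1 b1 b2 c1 h1 h2.
  have := hq (tB, B X b1) (tC, C X c1) (tA, A X a1) (tB, B X b2).
  rewrite !(E_same, E_AB, E_BA, E_AC, E_CA, E_BC, E_CB) => /(_ h1 h2).
  by case/or4P => // ->; rewrite ?orbT.
Qed.

Definition fq {K : fieldType} (X : lines_variety K) (P Q R S : hyperplane K) :=
  [|| is_line_of X P R, is_line_of X R Q, is_line_of X Q S | is_line_of X S P].

Lemma fq1 (K : fieldType) (X : lines_variety K) P Q R S : fq X P Q R S = fq X Q P R S.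
Proof.
rewrite /fq (is_line_ofC X Q R) (is_line_ofC X R P) (is_line_ofC X P S) (is_line_ofC X S Q).
by case: (is_line_of X P R); case: (is_line_of X R Q); case: (is_line_of X Q S);
  case: (is_line_of X S P).
Qed.
Lemma fq2 (K : fieldType) (X : lines_variety K) P Q R S : fq X P Q R S = fq X P Q S R.
Proof.
rewrite /fq (is_line_ofC X P S) (is_line_ofC X S Q) (is_line_ofC X Q R) (is_line_ofC X R P).
by case: (is_line_of X P R); case: (is_line_of X R Q); case: (is_line_of X Q S);
  case: (is_line_of X S P).
Qed.
Lemma fq3 (K : fieldType) (X : lines_variety K) P Q R S : fq X P Q R S = fq X R S P Q.
Proof.
rewrite /fq (is_line_ofC X R P) (is_line_ofC X P S) (is_line_ofC X S Q) (is_line_ofC X Q R).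
by case: (is_line_of X P R); case: (is_line_of X R Q); case: (is_line_of X Q S);
  case: (is_line_of X S P).
Qed.

Lemma cond_quad (K : fieldType) (X : lines_variety K) :
  resembles_Ferrers (U3 X) -> resembles_Ferrers (U2 X) -> resembles_Ferrers (U1 X) ->
  cond1 X -> cond2 X -> cond3 X -> quad X.
Proof.
move=> f3 f2 f1 hc1 hc2 hc3.
have main : forall P Q R S,
    (Lab X P Q /\ (Lab X R S \/ Lac X R S \/ Lbc X R S)) \/
    (Lac X P Q /\ (Lac X R S \/ Lbc X R S)) \/ (Lbc X P Q /\ Lbc X R S) -> fq X P Q R S.
  move=> P Q R S; rewrite /fq.
  case=> [[[a1 [b1 [h1 -> ->]]] [[a2 [b2 [h2 -> ->]]]|[[a2 [c1 [h2 -> ->]]]|[b2 [c1 [h2 -> ->]]]]]]|[[[a1 [c1 [h1 -> ->]]] [[a2 [c2 [h2 -> ->]]]|[b1 [c2 [h2 -> ->]]]]]|[[b1 [c1 [h1 -> ->]]] [b2 [c2 [h2 -> ->]]]]]];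
    rewrite !(E_same, E_AB, E_BA, E_AC, E_CA, E_BC, E_CB) /=.
  - by case/orP: (ferrers2 f3 _ _ _ _ h1 h2) => ->; rewrite ?orbT.
  - by case/or3P: (hc1 _ _ _ _ h1 h2) => ->; rewrite ?orbT.
  - by case/or3P: (hc3 a1 b2 b1 c1 h2 h1) => ->; rewrite ?orbT.
  - by case/orP: (ferrers2 f2 _ _ _ _ h1 h2) => ->; rewrite ?orbT.
  - by case/or3P: (hc2 a1 b1 c1 c2 h1 h2) => ->; rewrite ?orbT.
  - by case/orP: (ferrers2 f1 _ _ _ _ h1 h2) => ->; rewrite ?orbT.
have ord : forall P Q R S, (Lab X P Q \/ Lac X P Q \/ Lbc X P Q) ->
    (Lab X R S \/ Lac X R S \/ Lbc X R S) -> fq X P Q R S.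
  move=> P Q R S [h|[h|h]] [g|[g|g]];
    first [ by apply: main; tauto | by rewrite fq3; apply: main; tauto ].
move=> P Q R S /lineP hPQ /lineP hRS.
have hPQ' : (Lab X P Q \/ Lac X P Q \/ Lbc X P Q) \/ (Lab X Q P \/ Lac X Q P \/ Lbc X Q P)
  by tauto.
have hRS' : (Lab X R S \/ Lac X R S \/ Lbc X R S) \/ (Lab X S R \/ Lac X S R \/ Lbc X S R)
  by tauto.
change (fq X P Q R S).
by case: hPQ' => hPQ'; case: hRS' => hRS'; [ | rewrite fq2 | rewrite fq1 | rewrite fq1 fq2];
  apply: ord.
Qed.

Definition hcond {K : fieldType} (X : lines_variety K) :=
   forall (a1 a2 : 'I_(d1 X)) (b1 b2 : 'I_(d2 X)) (c1 c2 : 'I_(d3 X)),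
     [/\ (mu a1 b1 c1, mu a2 b1 c1) != (1, 1)%N
           \/ (mu_ij0 a1 b1, mu_ij0 a2 b1) != (1, 0)%N,
         (mu a1 b1 c1, mu a1 b1 c2) != (1, 1)%N
           \/ (mu_i0k a1 c1, mu_i0k a1 c2) != (1, 0)%N
       & (mu a1 b1 c1, mu a1 b2 c1) != (1, 1)%N
           \/ (mu_0jk b1 c1, mu_0jk b2 c1) != (1, 0)%N].

Lemma hcond_cond {K : fieldType} (X : lines_variety K) :
  hcond X -> cond1 X /\ cond2 X /\ cond3 X.
Proof.
move=> hc; split; [|split].
- move=> a1 a2 b1 c1 h1 h2; have [+ _ _] := hc a1 a2 b1 b1 c1 c1.
  rewrite !muE /mu_ij0 !E_AB h1 h2 => /orP; apply/implyP.
  by case: ((a1, c1) \in U2 X); case: ((a2, b1) \in U3 X); case: ((b1, c1) \in U1 X).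
- move=> a1 b1 c1 c2 h1 h2; have [_ + _] := hc a1 a1 b1 b1 c1 c2.
  rewrite !muE /mu_i0k !E_AC h1 h2 => /orP; apply/implyP.
  by case: ((a1, b1) \in U3 X); case: ((b1, c1) \in U1 X); case: ((a1, c2) \in U2 X).
- move=> a1 b1 b2 c1 h1 h2; have [_ _ +] := hc a1 a1 b1 b2 c1 c1.
  rewrite !muE /mu_0jk !E_BC h1 h2 => /orP; apply/implyP.
  by case: ((a1, b1) \in U3 X); case: ((a1, c1) \in U2 X); case: ((b2, c1) \in U1 X).
Qed.

Lemma cond_hcond {K : fieldType} (X : lines_variety K) :
  cond1 X -> cond2 X -> cond3 X -> hcond X.
Proof.
move=> hc1 hc2 hc3 a1 a2 b1 b2 c1 c2; split; apply/orP;
  rewrite !muE /mu_ij0 /mu_i0k /mu_0jk !(E_AB, E_AC, E_BC).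
- move: (hc1 a1 a2 b1 c1).
  by case: ((a1, b1) \in U3 X); case: ((a2, c1) \in U2 X); case: ((a1, c1) \in U2 X);
    case: ((a2, b1) \in U3 X); case: ((b1, c1) \in U1 X) => //= /(_ isT isT).
- move: (hc2 a1 b1 c1 c2).
  by case: ((a1, c1) \in U2 X); case: ((b1, c2) \in U1 X); case: ((a1, b1) \in U3 X);
    case: ((b1, c1) \in U1 X); case: ((a1, c2) \in U2 X) => //= /(_ isT isT).
- move: (hc3 a1 b1 b2 c1).
  by case: ((b1, c1) \in U1 X); case: ((a1, b2) \in U3 X); case: ((a1, b1) \in U3 X);
    case: ((a1, c1) \in U2 X); case: ((b2, c1) \in U1 X) => //= /(_ isT isT).
Qed.

Theorem proposition3p8 (K : closedFieldType) (charK0 : [pchar K] =i pred0)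
  (X : lines_variety K) :
  resembles_Ferrers (U3 X) -> resembles_Ferrers (U2 X) -> resembles_Ferrers (U1 X) ->
  (Hyp4_star X <->
   forall (a1 a2 : 'I_(d1 X)) (b1 b2 : 'I_(d2 X)) (c1 c2 : 'I_(d3 X)),
     [/\ (mu a1 b1 c1, mu a2 b1 c1) != (1, 1)%N
           \/ (mu_ij0 a1 b1, mu_ij0 a2 b1) != (1, 0)%N,
         (mu a1 b1 c1, mu a1 b1 c2) != (1, 1)%N
           \/ (mu_i0k a1 c1, mu_i0k a1 c2) != (1, 0)%N
       & (mu a1 b1 c1, mu a1 b2 c1) != (1, 1)%N
           \/ (mu_0jk b1 c1, mu_0jk b2 c1) != (1, 0)%N]).
Proof.
move=> f3 f2 f1; split.
- move=> /(Hyp4_quad _ X).1 /quad_cond [hc1 [hc2 hc3]].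
  exact (cond_hcond X hc1 hc2 hc3).
- move=> hc; apply/(Hyp4_quad _ X).2.
  have [hc1 [hc2 hc3]] := hcond_cond X hc.
  exact: cond_quad.
Qed.
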